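(* Let $\{\alpha_{i,j,k}\}_{1\le i,j,k\le d}$ be real numbers such that $\alpha_{\pi(i),\pi(j),\pi(k)}=\alpha_{i,j,k}$ for every $(i,j,k)$ and every permutation $\pi$ of $(i,j,k)$. Suppose the system $$\frac{\partial\varphi}{\partial t_i}=\sum_{j,k}\alpha_{i,j,k}t_j\frac{\partial\varphi}{\partial t_k}+t_i\varphi,\qquad i=1,\dots,d,$$ has a solution $\varphi$ of class $C^2$ on a neighborhood $V$ of $\mathbf 0\in\mathbb R^d$ with $\varphi(\mathbf 0)\ne0$. For $k=1,\dots,d$ let $A_k:=(\alpha_{k,r,s})_{1\le r,s\le d}$ and for $i,j$ let $C_{i,j}:=[A_i,A_j]=A_iA_j-A_jA_i$. Then for all $(i,j)\in\{1,\dots,d\}^2$ and all $\mathbf t=(t_1,\dots,t_d)$ in a neighborhood of $\mathbf 0$, $$\big(C_{i,j}\mathbf t\big)\cdot\Big(\big(I-t_1A_1-\cdots-t_dA_d\big)^{-1}\mathbf t\Big)=0,$$ where $I$ is the $d\times d$ identity matrix and $\cdot$ is the standard inner product on $\mathbb R^d$. *)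

(* Defs.v *)
From HB Require Import structures.
From mathcomp Require Import all_boot all_order all_algebra.
From mathcomp Require Import all_classical all_reals all_analysis.
Set Implicit Arguments. Unset Strict Implicit. Unset Printing Implicit Defensive.
Import Order.TTheory GRing.Theory Num.Theory.
Import numFieldNormedType.Exports.
Local Open Scope ring_scope.
Local Open Scope classical_set_scope.

(* Points of R^d are column vectors 'cV[R]_d; coordinate t_i is t i 0. *)

Definition basis_vec {R : realType} {d : nat} (i : 'I_d) : 'cV[R]_d := delta_mx i 0.

Definition partial {R : realType} {d : nat} (i : 'I_d) (f : 'cV[R]_d -> R)
  (x : 'cV[R]_d) : R := 'D_(basis_vec i) f x.

Definition C2_on {R : realType} {d : nat} (V : set 'cV[R]_d) (f : 'cV[R]_d -> R) : Prop :=
  forall x, V x ->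
    {for x, continuous f} /\
    forall i : 'I_d,
      derivable f x (basis_vec i) /\ {for x, continuous (partial i f)} /\
      forall j : 'I_d,
        derivable (partial i f) x (basis_vec j) /\
        {for x, continuous (partial j (partial i f))}.

Definition dotv {R : realType} {d : nat} (u v : 'cV[R]_d) : R :=
  \sum_(r < d) u r 0 * v r 0.

Definition Amat {R : realType} {d : nat} (alpha : 'I_d -> 'I_d -> 'I_d -> R)
  (k : 'I_d) : 'M[R]_d := \matrix_(r < d, s < d) alpha k r s.

Definition Cmat {R : realType} {d : nat} (alpha : 'I_d -> 'I_d -> 'I_d -> R)
  (i j : 'I_d) : 'M[R]_d := Amat alpha i *m Amat alpha j - Amat alpha j *m Amat alpha i.

(* Main.v *)
Require Import Defs.
From HB Require Import structures.
From mathcomp Require Import all_boot all_order all_algebra.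
From mathcomp Require Import all_classical all_reals all_analysis.
From mathcomp Require Import lra ring perm.
Set Implicit Arguments. Unset Strict Implicit. Unset Printing Implicit Defensive.
Import Order.TTheory GRing.Theory Num.Theory.
Import numFieldNormedType.Exports.
Local Open Scope ring_scope.
Local Open Scope classical_set_scope.

Section S.
Variable R : realType.
Variable V : normedModType R.

Lemma line_is_derive (f : V -> R) (a y : V) (s : R) :
  derivable f (s *: a + y) a ->
  is_derive s 1 (fun r : R => f (r *: a + y)) ('D_a f (s *: a + y)).
Proof.
move=> df.
have E : (fun h : R => h^-1 *: (((fun r : R => f (r *: a + y)) \o shift s) (h *: 1)
           - f (s *: a + y)))
  = (fun h : R => h^-1 *: ((f \o shift (s *: a + y)) (h *: a) - f (s *: a + y))).
  apply: funext => h /=.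
  by rewrite [h *: 1]mulr1 scalerDl addrA.
split.
  by rewrite /derivable E.
by rewrite /derive E.
Qed.

Lemma mvt_gen (g dg : R -> R) (h : R) : 0 < h ->
  (forall s, 0 <= s <= h -> is_derive s 1 g (dg s)) ->
  exists2 c, 0 <= c <= h & g h - g 0 = dg c * h.
Proof.
move=> h0 dg_.
have H1 : forall x, x \in `]0, h[%R -> is_derive x 1 g (dg x).
  move=> x; rewrite in_itv /= => /andP[x0 xh]; apply: dg_.
  by rewrite !ltW.
have H2 : {within `[0, h], continuous g}.
  apply: derivable_within_continuous => x; rewrite in_itv /= => xin.
  have := dg_ x xin => H; exact: ex_derive.
have [c cin E] := MVT h0 H1 H2.
exists c; last by rewrite E subr0.
by move: cin; rewrite in_itv /= => /andP[c0 ch]; rewrite !ltW.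
Qed.

Lemma delta_mvt (f : V -> R) (x a b : V) (h : R) : 0 < h ->
  (forall s r : R, 0 <= s <= h -> 0 <= r <= h ->
     derivable f (s *: a + (r *: b + x)) a /\
     derivable ('D_a f) (s *: a + (r *: b + x)) b) ->
  exists c, exists c', [/\ 0 <= c <= h, 0 <= c' <= h &
    f (h *: a + (h *: b + x)) - f (h *: a + x) - (f (h *: b + x) - f x)
    = 'D_b ('D_a f) (c *: a + (c' *: b + x)) * h * h].
Proof.
move=> h0 D.
have hh : 0 <= h <= h by rewrite (ltW h0) /=.
have z0 : 0 <= (0:R) <= h by rewrite lexx ltW.
have E0 : forall y : V, y = 0 *: b + y by move=> y; rewrite scale0r add0r.
pose g1 := fun s : R => f (s *: a + (h *: b + x)).
pose g2 := fun s : R => f (s *: a + x).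
pose dg := fun s : R => 'D_a f (s *: a + (h *: b + x)) - 'D_a f (s *: a + x).
have Hd : forall s, 0 <= s <= h -> is_derive s 1 (g1 - g2) (dg s).
  move=> s sin; apply: is_deriveB.
    exact/line_is_derive/(D s h sin hh).1.
  apply: line_is_derive.
  have -> : s *: a + x = s *: a + (0 *: b + x) by rewrite scale0r add0r.
  exact: (D s 0 sin z0).1.
have [c cin Ec] := mvt_gen h0 Hd.
pose G := fun r : R => 'D_a f (r *: b + (c *: a + x)).
have HG : forall r, 0 <= r <= h -> derivable ('D_a f) (r *: b + (c *: a + x)) b.
  move=> r rin; rewrite addrCA; exact: (D c r cin rin).2.
have [c' c'in Ec'] := mvt_gen h0 (fun r rin => line_is_derive (HG r rin)).
exists c, c'; split => //.
have E2 : f (h *: a + (h *: b + x)) - f (h *: a + x)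
   - (f (0 *: a + (h *: b + x)) - f (0 *: a + x)) =
  ('D_a f (c *: a + (h *: b + x)) - 'D_a f (c *: a + x)) * h := Ec.
rewrite !scale0r !add0r in E2; rewrite E2.
rewrite scale0r add0r in Ec'.
have -> : c *: a + (h *: b + x) = h *: b + (c *: a + x) by rewrite addrCA.
rewrite Ec'.
by rewrite [c' *: b + (_ + _)]addrCA.
Qed.

End S.


Section S.
Variable R : realType.
Variable V : normedModType R.
Lemma schwarz_core (f : V -> R) (x a b : V) (D1 D2 : V -> R) :
  (forall y, 'D_b ('D_a f) y = D1 y) -> (forall y, 'D_a ('D_b f) y = D2 y) ->
  (\forall y \near x, [/\ derivable f y a, derivable f y b,
      derivable ('D_a f) y b & derivable ('D_b f) y a]) ->
  {for x, continuous D1} -> {for x, continuous D2} ->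
  D1 x = D2 x.
Proof.
move=> D1E D2E Hn c1 c2.
have [E|ne] := eqVneq (D1 x) (D2 x); first exact: E.
exfalso.
pose e := `|D1 x - D2 x| / 2.
have e0 : 0 < e by rewrite /e divr_gt0 // normr_gt0 subr_eq0.
have N1 := (cvgrPdist_lt _ _).1 c1 e e0.
have N2 := (cvgrPdist_lt _ _).1 c2 e e0.
have : \forall y \near x, [/\ derivable f y a, derivable f y b,
      derivable ('D_a f) y b, derivable ('D_b f) y a &
      `|D1 x - D1 y| < e /\ `|D2 x - D2 y| < e].
  near=> y.
  have [H1 H2 H3 H4] : [/\ derivable f y a, derivable f y b,
      derivable ('D_a f) y b & derivable ('D_b f) y a] by near: y; exact: Hn.
  have H5 : `|D1 x - D1 y| < e by near: y; exact: N1.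
  have H6 : `|D2 x - D2 y| < e by near: y; exact: N2.
  by split.
move=> /nbhs_normP [del del0 Hdel].
pose h := del / (2 * (`|a| + `|b| + 1)).
have h0 : 0 < h by rewrite /h divr_gt0 // mulr_gt0 // ltr_wpDl // addr_ge0.
have Key : forall s r : R, 0 <= s <= h -> 0 <= r <= h ->
    `|x - (s *: a + (r *: b + x))| < del.
  move=> s r /andP[s0 sh] /andP[r0 rh].
  rewrite addrA opprD addrCA subrr addr0 normrN.
  apply: (le_lt_trans (ler_normD _ _)).
  rewrite !normrZ (ger0_norm s0) (ger0_norm r0).
  have hb : h * (`|a| + `|b| + 1) = del / 2.
    have K0 : `|a| + `|b| + 1 != 0 by rewrite gt_eqF // ltr_wpDl // addr_ge0.
    by rewrite /h invfM -!mulrA mulVf // mulr1.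
  have sa : s * `|a| <= h * `|a| by rewrite ler_wpM2r.
  have rb : r * `|b| <= h * `|b| by rewrite ler_wpM2r.
  rewrite mulrDr mulrDr mulr1 in hb.
  have del0' : 0 < del := del0.
  lra.
have P1 : forall s r : R, 0 <= s <= h -> 0 <= r <= h ->
     derivable f (s *: a + (r *: b + x)) a /\
     derivable ('D_a f) (s *: a + (r *: b + x)) b.
  by move=> s r sh rh; have [] := Hdel _ (Key s r sh rh).
have P2 : forall s r : R, 0 <= s <= h -> 0 <= r <= h ->
     derivable f (s *: b + (r *: a + x)) b /\
     derivable ('D_b f) (s *: b + (r *: a + x)) a.
  by move=> s r sh rh; rewrite addrCA; have [] := Hdel _ (Key r s rh sh).
have [p1 [p2 [p1i p2i E1]]] := delta_mvt h0 P1.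
have [q1 [q2 [q1i q2i E2]]] := delta_mvt h0 P2.
have B1 := Hdel _ (Key p1 p2 p1i p2i).
have B2 := Hdel _ (Key q2 q1 q2i q1i).
rewrite [q1 *: b + (q2 *: a + x)]addrCA in E2.
rewrite [h *: b + (h *: a + x)]addrCA in E2.
have hne : h != 0 by rewrite gt_eqF.
rewrite D1E in E1; rewrite D2E in E2.
have : D1 (p1 *: a + (p2 *: b + x)) * h * h = D2 (q2 *: a + (q1 *: b + x)) * h * h.
  rewrite -E1 -E2; lra.
move=> /(mulIf hne) /(mulIf hne) Eq.
case: B1 => _ _ _ _ [B1 _]; case: B2 => _ _ _ _ [_ B2].
have : `|D1 x - D2 x| < e + e.
  have -> : D1 x - D2 x = (D1 x - D1 (p1 *: a + (p2 *: b + x)))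
     - (D2 x - D2 (q2 *: a + (q1 *: b + x))) by rewrite Eq; lra.
  apply: (le_lt_trans (ler_normB _ _)); exact: ltrD.
rewrite /e; lra.
Unshelve. all: by end_near. Qed.

Lemma schwarz (f : V -> R) (x a b : V) :
  (\forall y \near x, [/\ derivable f y a, derivable f y b,
      derivable ('D_a f) y b & derivable ('D_b f) y a]) ->
  {for x, continuous ('D_b ('D_a f))} -> {for x, continuous ('D_a ('D_b f))} ->
  'D_b ('D_a f) x = 'D_a ('D_b f) x.
Proof. exact: (@schwarz_core f x a b _ _ (fun y => erefl) (fun y => erefl)). Qed.
End S.


Section D.
Variable R : realType.
Variable V : normedModType R.

Lemma is_derive_mulfun (f g : V -> R) x v (df dg : R) :
  is_derive x v f df -> is_derive x v g dg ->
  is_derive x v (fun y => f y * g y) (f x * dg + g x * df).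
Proof. move=> Hf Hg; exact: (is_deriveM Hf Hg). Qed.

Lemma is_derive_addfun (f g : V -> R) x v (df dg : R) :
  is_derive x v f df -> is_derive x v g dg ->
  is_derive x v (fun y => f y + g y) (df + dg).
Proof. move=> Hf Hg; exact: (is_deriveD Hf Hg). Qed.

Lemma is_derive_sumfun n (h : 'I_n -> V -> R) x v (dh : 'I_n -> R) :
  (forall i, is_derive x v (h i) (dh i)) ->
  is_derive x v (fun y => \sum_(i < n) h i y) (\sum_(i < n) dh i).
Proof. move=> H; have := is_derive_sum H; by rewrite fct_sumE. Qed.

Lemma is_derive_cstmul (f : V -> R) (c : R) x v (df : R) :
  is_derive x v f df -> is_derive x v (fun y => c * f y) (c * df).
Proof.
move=> Hf; have := is_derive_mulfun (is_derive_cst c x v) Hf.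
by rewrite mulr0 addr0.
Qed.
End D.

Lemma is_derive_coord (R : realType) (d : nat) (x v : 'cV[R]_d) (j : 'I_d) :
  is_derive x v (fun y : 'cV[R]_d => y j 0) (v j 0).
Proof.
have E : (fun h : R => h^-1 *: (((fun y : 'cV[R]_d => y j 0) \o shift x) (h *: v) - x j 0))
  =1 (fun h : R => h^-1 * h * v j 0).
  by move=> h /=; rewrite !mxE addrK; exact: mulrA.
split.
  rewrite /derivable (eq_fun E); apply: (is_cvg_near_cst (v j 0)) => //=.
  near=> h; rewrite mulVf ?mul1r //.
  by near: h; exact: nbhs_dnbhs_neq.
rewrite /derive (eq_fun E); apply/lim_near_cst => //.
near=> h; rewrite mulVf ?mul1r //.
by near: h; exact: nbhs_dnbhs_neq.
Unshelve. all: by end_near. Qed.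

Lemma deriv_rhs (R : realType) (d : nat) (alpha : 'I_d -> 'I_d -> 'I_d -> R)
  (phi : 'cV[R]_d -> R) (t : 'cV[R]_d) (a b : 'I_d) :
  derivable phi t (basis_vec b) ->
  (forall k, derivable (partial k phi) t (basis_vec b)) ->
  'D_(basis_vec b) (fun y : 'cV[R]_d =>
      \sum_(j < d) \sum_(k < d) alpha a j k * y j 0 * partial k phi y
      + y a 0 * phi y) t
  = \sum_(k < d) alpha a b k * partial k phi t
    + \sum_(j < d) \sum_(k < d) alpha a j k * t j 0 * partial b (partial k phi) t
    + (a == b)%:R * phi t + t a 0 * partial b phi t.
Proof.
move=> dphi dpk.
have D : is_derive t (basis_vec b) (fun y : 'cV[R]_d =>
      \sum_(j < d) \sum_(k < d) alpha a j k * y j 0 * partial k phi y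
      + y a 0 * phi y)
   (\sum_(j < d) \sum_(k < d) (alpha a j k * t j 0 * partial b (partial k phi) t
        + partial k phi t * (alpha a j k * (basis_vec b : 'cV[R]_d) j 0))
    + (t a 0 * partial b phi t + phi t * (basis_vec b : 'cV[R]_d) a 0)).
  apply: is_derive_addfun; last first.
    apply: is_derive_mulfun; first exact: is_derive_coord.
    exact: derivableP.
  apply: is_derive_sumfun => j; apply: is_derive_sumfun => k.
  apply: is_derive_mulfun; last exact: derivableP.
  apply: is_derive_cstmul; exact: is_derive_coord.
rewrite derive_val.
have E : forall j : 'I_d, (basis_vec b : 'cV[R]_d) j 0 = (j == b)%:R.
  by move=> j; rewrite /basis_vec mxE eqxx andbT.
under eq_bigr => j _ do rewrite big_split /=.
rewrite big_split /=.
have -> : \sum_(j < d) \sum_(k < d) partial k phi t * (alpha a j k * (basis_vec b : 'cV[R]_d) j 0)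
   = \sum_(k < d) alpha a b k * partial k phi t.
  rewrite (bigD1 b) //= [X in _ + X]big1 ?addr0; last first.
    by move=> j jb; apply: big1 => k _; rewrite E (negbTE jb) !mulr0.
  by apply: eq_bigr => k _; rewrite E eqxx mulr1 mulrC.
rewrite E.
ring.
Qed.


Lemma det_cont (R : realType) (T : topologicalType) (d : nat) (A : T -> 'M[R]_d) :
  (forall i j, continuous (fun x => A x i j)) -> continuous (fun x => \det (A x)).
Proof.
move=> HA; rewrite /determinant.
apply: (@continuous_big _ _ +%R 0 xpredT) => //.
  exact: add_continuous.
move=> s _ x.
have Hp : continuous (fun y => \prod_(i < d) A y i (s i)).
  apply: continuous_big => //.
  exact: mul_continuous.
exact: (continuousM (cvg_cst _) (Hp x)).
Qed.


Section Alg.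
Variable R : realType.
Variable d : nat.
Variable alpha : 'I_d -> 'I_d -> 'I_d -> R.
Hypothesis Halpha : forall i j k : 'I_d,
     [/\ alpha i k j = alpha i j k, alpha j i k = alpha i j k,
         alpha j k i = alpha i j k, alpha k i j = alpha i j k
       & alpha k j i = alpha i j k].

Definition Mt (t : 'cV[R]_d) : 'M[R]_d := \sum_(k < d) t k 0 *: Amat alpha k.

Lemma MtE t a b : Mt t a b = \sum_(k < d) t k 0 * alpha k a b.
Proof. by rewrite /Mt summxE; apply: eq_bigr => k _; rewrite !mxE. Qed.

Lemma Mt_tr t : (Mt t)^T = Mt t.
Proof.
apply/matrixP => a b; rewrite mxE !MtE; apply: eq_bigr => k _.
by have [-> _ _ _ _] := Halpha k a b.
Qed.

Lemma Amat_tr k : (Amat alpha k)^T = Amat alpha k.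
Proof. by apply/matrixP => a b; rewrite !mxE; have [-> _ _ _ _] := Halpha k a b. Qed.

Lemma sumA_tr (g : 'cV[R]_d) : (\sum_(k < d) g k 0 *: Amat alpha k)^T = \sum_(k < d) g k 0 *: Amat alpha k.
Proof.
apply/matrixP => a b; rewrite mxE !summxE; apply: eq_bigr => k _.
by rewrite !mxE; have [-> _ _ _ _] := Halpha k a b.
Qed.


Lemma comm_core (t g : 'cV[R]_d) (H : 'M[R]_d) (p : R) :
  (1%:M - Mt t) *m g = p *: t ->
  (1%:M - Mt t) *m H = (\sum_(k < d) g k 0 *: Amat alpha k + p%:M) + t *m g^T ->
  H^T = H ->
  (\sum_(k < d) g k 0 *: Amat alpha k + p%:M) *m Mt t
   = Mt t *m (\sum_(k < d) g k 0 *: Amat alpha k + p%:M).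
Proof.
set U := 1%:M - Mt t; set S := _ + p%:M => Ug UH Htr.
have Utr : U^T = U by rewrite /U linearB /= tr_scalar_mx Mt_tr.
have Str : S^T = S by rewrite /S linearD /= tr_scalar_mx sumA_tr.
have HU : H *m U = S + g *m t^T.
  by rewrite -Htr -Utr -trmx_mul UH linearD /= trmx_mul trmxK Str.
have E1 : U *m H *m U = S *m U + t *m (g^T *m U) by rewrite UH mulmxDl mulmxA.
have E2 : U *m (H *m U) = U *m S + (U *m g) *m t^T by rewrite HU mulmxDr mulmxA.
have gU : g^T *m U = p *: t^T by rewrite -{1}Utr -trmx_mul Ug linearZ.
rewrite -mulmxA E2 gU Ug -scalemxAr -scalemxAl in E1.
move/addIr: E1 => E.
move: E; rewrite /U mulmxBr mulmxBl mulmx1 mul1mx => /addrI.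
by move/oppr_inj.
Qed.

Lemma Cmat_sym i j r q : Cmat alpha i j r q = Cmat alpha r q i j.
Proof.
rewrite /Cmat !mxE; congr (_ - _); apply: eq_bigr => m _; rewrite !mxE.
  have [_ -> _ _ _] := Halpha r i m.
  by have [_ _ _ _ ->] := Halpha q m j.
have [_ _ _ -> _] := Halpha r m j.
have [_ _ -> _ _] := Halpha q i m.
by rewrite mulrC.
Qed.

Lemma dot_expand (t u : 'cV[R]_d) i j :
  dotv (Cmat alpha i j *m t) u =
  \sum_(r < d) \sum_(q < d) (u r 0 * t q 0) * Cmat alpha r q i j.
Proof.
rewrite /dotv; apply: eq_bigr => r _; rewrite mxE big_distrl /=.
apply: eq_bigr => q _; rewrite Cmat_sym.
by ring.
Qed.

Lemma comm_expand (t u : 'cV[R]_d) :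
  (\sum_(r < d) u r 0 *: Amat alpha r) *m Mt t
   - Mt t *m (\sum_(r < d) u r 0 *: Amat alpha r)
  = \sum_(r < d) \sum_(q < d) (u r 0 * t q 0) *: Cmat alpha r q.
Proof.
rewrite /Mt mulmx_suml [X in _ - X]mulmx_suml.
have E1 : \sum_(i < d) (u i 0 *: Amat alpha i *m \sum_(k < d) t k 0 *: Amat alpha k)
  = \sum_(r < d) \sum_(q < d) (u r 0 * t q 0) *: (Amat alpha r *m Amat alpha q).
  apply: eq_bigr => r _; rewrite mulmx_sumr; apply: eq_bigr => q _.
  by rewrite -scalemxAl -scalemxAr scalerA.
have E2 : \sum_(i < d) (t i 0 *: Amat alpha i *m \sum_(k < d) u k 0 *: Amat alpha k)
  = \sum_(r < d) \sum_(q < d) (u r 0 * t q 0) *: (Amat alpha q *m Amat alpha r).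
  rewrite exchange_big; apply: eq_bigr => q _; rewrite mulmx_sumr; apply: eq_bigr => r _.
  by rewrite -scalemxAl -scalemxAr scalerA mulrC.
rewrite E1 E2 -sumrB; apply: eq_bigr => r _; rewrite -sumrB; apply: eq_bigr => q _.
by rewrite /Cmat scalerBr.
Qed.

Lemma final_alg (t g : 'cV[R]_d) (H : 'M[R]_d) (p : R) i j :
  p != 0 -> (1%:M - Mt t) \in unitmx ->
  (1%:M - Mt t) *m g = p *: t ->
  (1%:M - Mt t) *m H = (\sum_(k < d) g k 0 *: Amat alpha k + p%:M) + t *m g^T ->
  H^T = H ->
  dotv (Cmat alpha i j *m t) (invmx (1%:M - Mt t) *m t) = 0.
Proof.
move=> p0 Uu Ug UH Htr.
have C := comm_core Ug UH Htr.
set U := 1%:M - Mt t in Uu Ug C *.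
set u := invmx U *m t.
have gu : g = p *: u by rewrite /u scalemxAr -Ug mulKmx.
have Ag : \sum_(k < d) g k 0 *: Amat alpha k = p *: \sum_(k < d) u k 0 *: Amat alpha k.
  by rewrite gu scaler_sumr; apply: eq_bigr => k _; rewrite mxE scalerA.
rewrite Ag mulmxDl mulmxDr mul_scalar_mx mul_mx_scalar in C.
move/addIr: C => C.
rewrite -scalemxAl -scalemxAr in C.
have C' := congr1 (fun X => p^-1 *: X) C.
rewrite /= !scalerA mulVf // !scale1r in C'.
have := congr1 (fun X : 'M[R]_d => X i j) (comm_expand t u).
rewrite /= C' subrr mxE summxE => ->.
rewrite dot_expand; apply: eq_bigr => r _; rewrite summxE; apply: eq_bigr => q _.
by rewrite [RHS]mxE.
Qed.

Lemma Mcol_entry t (f : 'I_d -> R) a :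
  (Mt t *m \col_k f k) a 0 = \sum_(j < d) \sum_(k < d) alpha a j k * t j 0 * f k.
Proof.
rewrite mxE; under eq_bigr do rewrite MtE mxE big_distrl.
rewrite exchange_big; apply: eq_bigr => j _; apply: eq_bigr => k _ /=.
have [_ -> _ _ _] := Halpha a j k; ring.
Qed.

Lemma Mmat_entry t (F : 'I_d -> 'I_d -> R) a b :
  (Mt t *m \matrix_(k, c) F k c) a b = \sum_(j < d) \sum_(k < d) alpha a j k * t j 0 * F k b.
Proof.
rewrite mxE; under eq_bigr do rewrite MtE mxE big_distrl.
rewrite exchange_big; apply: eq_bigr => j _; apply: eq_bigr => k _ /=.
have [_ -> _ _ _] := Halpha a j k; ring.
Qed.
End Alg.


Theorem mainTheorem7 (R : realType) (d : nat)
  (alpha : 'I_d -> 'I_d -> 'I_d -> R)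
  (Halpha : forall i j k : 'I_d,
     [/\ alpha i k j = alpha i j k, alpha j i k = alpha i j k,
         alpha j k i = alpha i j k, alpha k i j = alpha i j k
       & alpha k j i = alpha i j k])
  (V : set 'cV[R]_d) (phi : 'cV[R]_d -> R)
  (HVo : open V) (HV0 : V 0)
  (Hphi : C2_on V phi)
  (Hsys : forall t, V t -> forall i : 'I_d,
     partial i phi t =
       \sum_(j < d) \sum_(k < d) alpha i j k * t j 0 * partial k phi t
       + t i 0 * phi t)
  (Hphi0 : phi 0 != 0) :
  forall i j : 'I_d,
    \forall t \near (0 : 'cV[R]_d),
      dotv (Cmat alpha i j *m t)
           (invmx (1%:M - \sum_(k < d) t k 0 *: Amat alpha k) *m t) = 0.
Proof.
move=> i0 j0.
have nV : nbhs (0 : 'cV[R]_d) V := open_nbhs_nbhs (conj HVo HV0).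
have nphi : \forall t \near (0 : 'cV[R]_d), phi t != 0.
  exact: (cvgr_neq0 (phi 0) (Hphi 0 HV0).1 Hphi0).
have ndet : \forall t \near (0 : 'cV[R]_d), \det (1%:M - Mt alpha t) != 0.
  have Hc : continuous (fun t : 'cV[R]_d => \det (1%:M - Mt alpha t)).
    apply: det_cont => a b.
    have -> : (fun x : 'cV[R]_d => (1%:M - Mt alpha x) a b)
        = (fun x => (a == b)%:R - \sum_(k < d) x k 0 * alpha k a b).
      by apply: funext => x; rewrite !mxE MtE.
    move=> x.
    have Hs : continuous (fun y : 'cV[R]_d => \sum_(k < d) y k 0 * alpha k a b).
      apply: continuous_big => [|k _ y]; first exact: add_continuous.
      have c1 : {for y, continuous (fun x0 : 'cV[R]_d => x0 k 0)}.
        exact: coord_continuous.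
      have c3 : {for y, continuous (fun _ : 'cV[R]_d => alpha k a b)}.
        first [exact: cst_continuous | apply: cvg_cst | exact: (cst_continuous y) | exact: (@cst_continuous _ _ (alpha k a b) y)].
      have c2 := continuousM c1 c3.
      exact: c2.
    exact: (continuousB (cvg_cst _) (Hs x)).
  apply: (cvgr_neq0 _ (Hc 0)).
  have -> : Mt alpha (0 : 'cV[R]_d) = 0.
    by rewrite /Mt big1 // => k _; rewrite mxE scale0r.
  by rewrite subr0 det1 oner_neq0.
near=> t.
have Vt : V t by near: t; exact: nV.
have pt : phi t != 0 by near: t; exact: nphi.
have dt : \det (1%:M - Mt alpha t) != 0 by near: t; exact: ndet.
have nVt : nbhs t V := open_nbhs_nbhs (conj HVo Vt).
change (dotv (Cmat alpha i0 j0 *m t) (invmx (1%:M - Mt alpha t) *m t) = 0).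
have C2t := Hphi t Vt.
apply: (@final_alg R d alpha Halpha t (\col_k partial k phi t)
   (\matrix_(a, b) partial b (partial a phi) t) (phi t)).
- exact: pt.
- by rewrite unitmxE unitfE.
- apply/matrixP => a z; rewrite (ord1 z) mulmxBl mul1mx.
  rewrite [LHS]mxE [X in _ + X]mxE Mcol_entry // [X in X + _]mxE [RHS]mxE.
  rewrite (Hsys t Vt a).
  ring.
- apply/matrixP => a b; rewrite mulmxBl mul1mx.
  rewrite [LHS]mxE [X in _ + X]mxE Mmat_entry // [X in X + _]mxE.
  have R1 : (\sum_(k < d) (\col_k0 partial k0 phi t) k 0 *: Amat alpha k + (phi t)%:M
      + t *m (\col_k partial k phi t)^T) a b
      = \sum_(k < d) alpha a b k * partial k phi t + (a == b)%:R * phi t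
        + t a 0 * partial b phi t.
    rewrite mxE [X in X + _]mxE summxE; congr (_ + _ + _).
    - apply: eq_bigr => k _; rewrite !mxE.
      have [_ _ _ -> _] := Halpha a b k; exact: mulrC.
    - by rewrite mxE mulr_natl.
    - by rewrite mxE big_ord1 !mxE.
  rewrite R1.
  have -> : partial b (partial a phi) t = 'D_(basis_vec b) (fun y : 'cV[R]_d =>
      \sum_(j < d) \sum_(k < d) alpha a j k * y j 0 * partial k phi y
      + y a 0 * phi y) t.
    apply: near_eq_derive; near=> y; apply: Hsys; near: y; exact: nVt.
  rewrite deriv_rhs; last 2 first.
  + exact: (C2t.2 b).1.
  + by move=> k; exact: ((C2t.2 k).2.2 b).1.
  ring.
- apply/matrixP => a b; rewrite !mxE.
  apply: (schwarz (f := phi) (x := t) (a := basis_vec b) (b := basis_vec a)).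
  + near=> y.
    have Vy : V y by near: y; exact: nVt.
    have C := Hphi y Vy.
    split.
    * exact: (C.2 b).1.
    * exact: (C.2 a).1.
    * exact: ((C.2 b).2.2 a).1.
    * exact: ((C.2 a).2.2 b).1.
  + exact: ((C2t.2 b).2.2 a).2.
  + exact: ((C2t.2 a).2.2 b).2.
Unshelve. all: by end_near.
Qed.
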